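(* Let $d\ge 3$, let $\mathcal M$ be a model of $\mathrm{PQM}_d$ with domain $\mathbb M$, and let $m\in\mathbb M$. If $p,q\in F^{\mathcal M}(m)$ are incompatible, then neither $p$ nor $q$ is a minimal element of $F^{\mathcal M}(m)$ with respect to inclusion.
   Context: Notation. For $d\ge 1$, $\mathbb H_d$ is the set of complex linear subspaces of $\mathbb C^d$, ordered by inclusion $\le$, with $\top=\mathbb C^d$, $\bot=\{0\}$, $p^\bot$ the orthogonal complement, $p\wedge q=p\cap q$ and $p\vee q=p+q$. $\mathbb U_d$ is the set of unitary operators on $\mathbb C^d$, and for $U\in\mathbb U_d$, $p\in\mathbb H_d$, $U(p)=\{Uv: v\in p\}$. The Sasaki projection is $p\,\&\,q := q\cap(q^\bot+p)$. Subspaces $p,q$ are compatible iff $p=(p\wedge q)\vee(p\wedge q^\bot)$ (equivalently, the orthogonal projectors onto $p$ and $q$ commute); otherwise they are incompatible. Language $\mathcal L_d$: a first-order language without equality and without constants, having a unary function symbol $u_U$ for each $U\in\mathbb U_d$, a unary function symbol $\pi_q$ for each $q\in\mathbb H_d$, and a unary relation symbol $[\,\cdot:p]$ for each $p\in\mathbb H_d$. Theory $\mathrm{PQM}_d$ (over $\mathcal L_d$) has the following axioms, for all $p,q\in\mathbb H_d$ and $U\in\mathbb U_d$: ($\neg\bot$) $\exists x\,\neg[x:\bot]$; ($\top$) $\forall x\,[x:\top]$; ($\le$) if $p\le q$: $\forall x\,([x:p]\to[x:q])$; ($\wedge$) if $p,q$ are compatible: $\forall x\,([x:p]\wedge[x:q]\to[x:p\wedge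 q])$; ($\pi_i$) $\forall x\,([x:p]\to[\pi_q(x):p\,\&\,q])$; ($\pi_c$) if $p\le q$: $\forall x\,([\pi_p(\pi_q(x)):\bot]\to[\pi_p(x):\bot])$; ($\pi_\bot$) $\forall x\,([\pi_q(x):\bot]\to[x:q^\bot])$; ($u_i$) $\forall x\,([x:p]\to[u_U(x):U(p)])$; ($u_e$) $\forall x\,([u_U(x):p]\to[x:U^{-1}(p)])$. Filter: for an $\mathcal L_d$-structure $\mathcal M$ with domain $\mathbb M$ and $m\in\mathbb M$, $F^{\mathcal M}(m)=\{p\in\mathbb H_d : [m:p]^{\mathcal M}\}$, where $[\,\cdot:p]^{\mathcal M}$ is the interpretation of the relation symbol $[\,\cdot:p]$ in $\mathcal M$. *)

(* Defs.v *)
From mathcomp Require Import all_boot all_algebra.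
From mathcomp Require Import complex.
From mathcomp Require Import reals Rstruct.
Set Implicit Arguments.
Unset Strict Implicit.
Unset Printing Implicit Defensive.
Import GRing.Theory Num.Theory.
Local Open Scope ring_scope.

Definition C : numClosedFieldType := complex Rdefinitions.R.

(* Vectors of C^d are row vectors 'rV[C]_d.  A complex linear subspace of C^d
   is represented canonically by the matrix <<A>>%MS whose row space is it:
   two matrices with the same row space have the same <<_>>, so this gives a
   faithful (Leibniz) encoding of the set H_d of subspaces. *)
Definition Hd (d : nat) := {A : 'M[C]_d | (<<A>>%MS == A)}.

Definition mkH (d : nat) (A : 'M[C]_d) : Hd d :=
  exist _ <<A>>%MS (introT eqP (genmx_id A)).

Definition Hmx (d : nat) (p : Hd d) : 'M[C]_d := sval p.

Definition inH (d : nat) (v : 'rV[C]_d) (p : Hd d) : bool := (v <= Hmx p)%MS.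

Definition leH (d : nat) (p q : Hd d) : bool := (Hmx p <= Hmx q)%MS.
Definition topH (d : nat) : Hd d := mkH 1%:M.
Definition botH (d : nat) : Hd d := mkH 0.
Definition meetH (d : nat) (p q : Hd d) : Hd d := mkH (Hmx p :&: Hmx q)%MS.
Definition joinH (d : nat) (p q : Hd d) : Hd d := mkH (Hmx p + Hmx q)%MS.

Definition adjmx (m n : nat) (A : 'M[C]_(m, n)) : 'M[C]_(n, m) :=
  (map_mx Num.conj A)^T.

(* orthogonal complement w.r.t. <u,w> = sum_j u_j conj(w_j):
   the rows u with u *m adjmx A = 0, i.e. u orthogonal to every row of A *)
Definition orthH (d : nat) (p : Hd d) : Hd d := mkH (kermx (adjmx (Hmx p))).

Definition sasaki (d : nat) (p q : Hd d) : Hd d := meetH q (joinH (orthH q) p).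

Definition compatible (d : nat) (p q : Hd d) : Prop :=
  p = joinH (meetH p q) (meetH p (orthH q)).

(* Unitary operators on C^d (as matrices acting on column vectors). *)
Definition is_unitary (d : nat) (U : 'M[C]_d) : bool := U *m adjmx U == 1%:M.
Definition Ud (d : nat) := {U : 'M[C]_d | is_unitary U}.
Definition Umx (d : nat) (U : Ud d) : 'M[C]_d := sval U.

(* image of a subspace under a matrix M acting on column vectors:
   U(p) = {U v | v in p}; for row vectors r = v^T this is r *m M^T. *)
Definition imH (d : nat) (M : 'M[C]_d) (p : Hd d) : Hd d := mkH (Hmx p *m M^T).
Definition UimH (d : nat) (U : Ud d) (p : Hd d) : Hd d := imH (Umx U) p.
Definition UinvimH (d : nat) (U : Ud d) (p : Hd d) : Hd d := imH (invmx (Umx U)) p.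

(* An L_d-structure: a domain together with interpretations of the unary
   function symbols u_U (U in U_d), pi_q (q in H_d), and of the unary
   relation symbols [. : p] (p in H_d).  No constants, no equality. *)
Record LStructure (d : nat) := {
  dom :> Type;
  u_ : Ud d -> dom -> dom;
  pi_ : Hd d -> dom -> dom;
  rel : Hd d -> dom -> Prop
}.
Arguments dom {d} M : rename.
Arguments u_ {d} M U x : rename.
Arguments pi_ {d} M q x : rename.
Arguments rel {d} M p x : rename.

Definition PQM_model (d : nat) (M : LStructure d) : Prop :=
  (exists x : M, ~ rel M (botH d) x) /\
  (forall x : M, rel M (topH d) x) /\
  (forall p q : Hd d, leH p q -> forall x : M, rel M p x -> rel M q x) /\
  (forall p q : Hd d, compatible p q ->
               forall x : M, rel M p x -> rel M q x -> rel M (meetH p q) x) /\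
  (forall p q : Hd d, forall x : M,
               rel M p x -> rel M (sasaki p q) (pi_ M q x)) /\
  (forall p q : Hd d, leH p q -> forall x : M,
               rel M (botH d) (pi_ M p (pi_ M q x)) -> rel M (botH d) (pi_ M p x)) /\
  (forall q : Hd d, forall x : M,
               rel M (botH d) (pi_ M q x) -> rel M (orthH q) x) /\
  (forall (p : Hd d) (U : Ud d) (x : M),
               rel M p x -> rel M (UimH U p) (u_ M U x)) /\
  (forall (p : Hd d) (U : Ud d) (x : M),
               rel M p (u_ M U x) -> rel M (UinvimH U p) x).

Definition filt (d : nat) (M : LStructure d) (m : M) : Hd d -> Prop :=
  fun p => rel M p m.

Definition minimal_in (d : nat) (S : Hd d -> Prop) (p : Hd d) : Prop :=
  S p /\ forall r : Hd d, S r -> leH r p -> r = p.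
Arguments PQM_model {d} M : rename.
Arguments filt {d} M m p : rename.
Arguments minimal_in {d} S p : rename.

(* Main.v *)
Require Import Defs.
From mathcomp Require Import all_boot all_algebra.
From mathcomp Require Import all_order complex reals Rstruct.
From mathcomp Require Import lra ring zify.
Import Order.TTheory GRing.Theory Num.Theory.
Local Open Scope ring_scope.
Set Implicit Arguments.
Unset Strict Implicit.
Unset Printing Implicit Defensive.

Section Hilb.
Variable d : nat.
Local Notation V := 'rV[C]_d.

Lemma adjmxK m n (A : 'M[C]_(m,n)) : adjmx (adjmx A) = A.
Proof. by apply/matrixP=> i j; rewrite !mxE conjCK. Qed.

Lemma adjmx_mul m n p (A : 'M[C]_(m,n)) (B : 'M[C]_(n,p)) :
  adjmx (A *m B) = adjmx B *m adjmx A.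
Proof. by rewrite /adjmx map_mxM trmx_mul. Qed.

Lemma adjmxD m n (A B : 'M[C]_(m,n)) : adjmx (A + B) = adjmx A + adjmx B.
Proof. by apply/matrixP=> i j; rewrite !mxE rmorphD. Qed.

Lemma adjmxN m n (A : 'M[C]_(m,n)) : adjmx (- A) = - adjmx A.
Proof. by apply/matrixP=> i j; rewrite !mxE rmorphN. Qed.

Lemma adjmxZ m n a (A : 'M[C]_(m,n)) : adjmx (a *: A) = a^* *: adjmx A.
Proof. by apply/matrixP=> i j; rewrite !mxE rmorphM. Qed.

Lemma adjmx0 m n : adjmx (0 : 'M[C]_(m,n)) = 0.
Proof. by apply/matrixP=> i j; rewrite !mxE rmorph0. Qed.

Definition orth m (A : 'M[C]_(m,d)) : 'M[C]_d := kermx (adjmx A).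

Lemma orthP m k (A : 'M[C]_(m,d)) (B : 'M[C]_(k,d)) :
  (B <= orth A)%MS = (B *m adjmx A == 0).
Proof. by apply/sub_kermxP/eqP. Qed.

Lemma orthS m k (A : 'M[C]_(m,d)) (B : 'M[C]_(k,d)) :
  (A <= B)%MS -> (orth B <= orth A)%MS.
Proof.
move=> /submxP[D ->]; rewrite orthP adjmx_mul mulmxA.
by move: (submx_refl (orth B)); rewrite orthP => /eqP->; rewrite mul0mx.
Qed.

Lemma orth_sym m k (A : 'M[C]_(m,d)) (B : 'M[C]_(k,d)) :
  (B <= orth A)%MS = (A <= orth B)%MS.
Proof.
rewrite !orthP; apply/eqP/eqP=> H.
  by rewrite -(adjmxK A) -adjmx_mul H adjmx0.
by rewrite -(adjmxK B) -adjmx_mul H adjmx0.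
Qed.

Lemma sub_orth_orth m (A : 'M[C]_(m,d)) : (A <= orth (orth A))%MS.
Proof. by rewrite -orth_sym. Qed.

Lemma rank_orth m (A : 'M[C]_(m,d)) : \rank (orth A) = (d - \rank A)%N.
Proof.
rewrite /orth mxrank_ker /adjmx mxrank_tr.
by rewrite (mxrank_map (Num.conj_op : {rmorphism C -> C})).
Qed.

Definition cdot (u v : V) : C := (u *m adjmx v) 0 0.

Lemma cdotE (u v : V) : cdot u v = \sum_j u 0 j * (v 0 j)^*.
Proof. by rewrite /cdot !mxE; apply: eq_bigr=> j _; rewrite !mxE. Qed.

Lemma cdot_eq0 (u : V) : cdot u u = 0 -> u = 0.
Proof.
rewrite cdotE => H; apply/matrixP=> i j; rewrite ord1 mxE.
have H0 : forall j, (true : bool) -> 0 <= u 0 j * (u 0 j)^*.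
  by move=> k _; rewrite -normCK exprn_ge0.
have := psumr_eq0P H0 H isT (i:=j); rewrite -normCK => /eqP.
by rewrite expf_eq0 /= normr_eq0 => /eqP.
Qed.

Lemma mx_rV0 (A : 'M[C]_(1,1)) : A = (A 0 0)%:M.
Proof. by apply/matrixP=> i j; rewrite !ord1 !mxE. Qed.

Lemma cap_orth0 m (A : 'M[C]_(m,d)) : (A :&: orth A :=: (0 : 'M[C]_d))%MS.
Proof.
apply/eqmxP; rewrite sub0mx andbT; apply/row_subP=> i.
set v := row i _.
have : (v <= A :&: orth A)%MS by apply: row_sub.
rewrite sub_capmx => /andP[/submxP[D vD]]; rewrite orthP => /eqP H.
suff -> : v = 0 by rewrite sub0mx.
apply: cdot_eq0; rewrite /cdot vD adjmx_mul mulmxA -vD H mul0mx mxE //.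
Qed.

Lemma full_orth m (A : 'M[C]_(m,d)) : row_full (A + orth A)%MS.
Proof.
rewrite -col_leq_rank.
have := mxrank_sum_cap A (orth A).
rewrite (eqmx_rank (introT eqmxP (cap_orth0 A))) mxrank0 addn0 rank_orth.
have := rank_leq_col A => le; rewrite subnKC // => ->; exact: leqnn.
Qed.

Lemma orthK m (A : 'M[C]_(m,d)) : (orth (orth A) :=: A)%MS.
Proof.
apply/eqmx_sym/eqmxP.
case: (mxrank_leqif_eq (sub_orth_orth A)) => _ <-.
by rewrite !rank_orth subKn // rank_leq_col.
Qed.

Lemma decomp_orth m k (A : 'M[C]_(m,d)) (B : 'M[C]_(k,d)) :
  (B <= A)%MS -> (B + (orth B :&: A) :=: A)%MS.
Proof.
move=> BA; apply: eqmx_trans (matrix_modl (orth B) BA) _.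
exact: capTmx (full_orth B).
Qed.

Lemma vec_decomp m (A : 'M[C]_(m,d)) (v : V) :
  exists2 a, (a <= A)%MS & (v - a <= orth A)%MS.
Proof.
have : (v <= A + orth A)%MS by apply: submx_full (full_orth A).
case/sub_addsmxP=> [[x y]] /= ->; exists (x *m A); first exact: submxMl.
by rewrite addrC addKr submxMl.
Qed.

Lemma cdot_orth (u v : V) : (u <= orth v)%MS = (cdot u v == 0).
Proof.
rewrite orthP /cdot.
apply/eqP/eqP=> [->|H]; first by rewrite mxE.
by apply/matrixP=> i j; rewrite !ord1 H mxE.
Qed.

Lemma cdotDl (u v w : V) : cdot (u + v) w = cdot u w + cdot v w.
Proof. by rewrite /cdot mulmxDl mxE. Qed.
Lemma cdotBl (u v w : V) : cdot (u - v) w = cdot u w - cdot v w.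
Proof. by rewrite /cdot mulmxBl !mxE. Qed.
Lemma cdotZl a (u w : V) : cdot (a *: u) w = a * cdot u w.
Proof. by rewrite /cdot -scalemxAl mxE. Qed.
Lemma cdotC (u v : V) : cdot v u = (cdot u v)^*.
Proof.
rewrite !cdotE rmorph_sum; apply: eq_bigr=> j _.
by rewrite rmorphM /= conjCK mulrC.
Qed.
Lemma cdotDr (u v w : V) : cdot w (u + v) = cdot w u + cdot w v.
Proof. by rewrite cdotC cdotDl rmorphD /= -!cdotC. Qed.
Lemma cdotBr (u v w : V) : cdot w (u - v) = cdot w u - cdot w v.
Proof. by rewrite cdotC cdotBl rmorphB /= -!cdotC. Qed.
Lemma cdotZr a (u w : V) : cdot w (a *: u) = a^* * cdot w u.
Proof. by rewrite cdotC cdotZl rmorphM /= -cdotC. Qed.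

Lemma orth_cdot m (A : 'M[C]_(m,d)) (u w : V) :
  (u <= orth A)%MS -> (w <= A)%MS -> cdot u w = 0.
Proof.
move=> uA wA; apply/eqP; rewrite -cdot_orth.
exact: submx_trans uA (orthS wA).
Qed.

Lemma orth_eqmx m k (A : 'M[C]_(m,d)) (B : 'M[C]_(k,d)) :
  (A :=: B)%MS -> (orth A :=: orth B)%MS.
Proof. by move=> eq; apply/eqmxP; rewrite !orthS // eq. Qed.

Lemma eqH (A B : 'M[C]_d) : (A :=: B)%MS -> mkH A = mkH B.
Proof.
move=> eqAB; rewrite /mkH.
move: (introT _ _) (introT _ _); rewrite (eq_genmx eqAB) => p1 p2.
by rewrite (eq_irrelevance p1 p2).
Qed.

Lemma HmxK (p : Hd d) : mkH (Hmx p) = p.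
Proof.
case: p => A HA; rewrite /mkH /Hmx /=.
move: (introT _ _); rewrite (eqP HA) => H.
by rewrite (eq_irrelevance H HA).
Qed.

Lemma Hmx_mkH (A : 'M[C]_d) : Hmx (mkH A) = <<A>>%MS.
Proof. by []. Qed.

Lemma mkH_gen m (A : 'M[C]_(m,d)) : mkH <<A>>%MS = mkH <<A>>%MS.
Proof. by []. Qed.

Lemma gcap m k (X : 'M[C]_(m,d)) (Y : 'M[C]_(k,d)) :
  <<(<<X>> :&: <<Y>>)%MS>>%MS = <<(X :&: Y)%MS>>%MS.
Proof. exact/eq_genmx/cap_eqmx/genmxE/genmxE. Qed.
Lemma gadd m k (X : 'M[C]_(m,d)) (Y : 'M[C]_(k,d)) :
  <<(<<X>> + <<Y>>)%MS>>%MS = <<(X + Y)%MS>>%MS.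
Proof. exact/eq_genmx/adds_eqmx/genmxE/genmxE. Qed.
Lemma gker m (X : 'M[C]_(m,d)) :
  <<kermx (adjmx <<X>>%MS)>>%MS = <<orth X>>%MS.
Proof. exact/eq_genmx/orth_eqmx/genmxE. Qed.
Lemma gcapk m k (X : 'M[C]_(m,d)) (Y : 'M[C]_(k,d)) :
  <<(<<X>> :&: kermx (adjmx <<Y>>%MS))%MS>>%MS = <<(X :&: orth Y)%MS>>%MS.
Proof. apply/eq_genmx/cap_eqmx/orth_eqmx/genmxE; exact: genmxE. Qed.
Definition gnorm := (genmx_id, gcapk, gcap, gadd, gker).

End Hilb.

Section Model.
Variable d : nat.
Variable M : LStructure d.
Hypothesis HM : PQM_model M.
Local Notation V := 'rV[C]_d.

Definition RR m (A : 'M[C]_(m,d)) (x : M) := Defs.rel M (mkH <<A>>%MS) x.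
Definition piA m (A : 'M[C]_(m,d)) (x : M) : M := pi_ M (mkH <<A>>%MS) x.

Lemma relRR (p : Hd d) x : Defs.rel M p x <-> RR (Hmx p) x.
Proof.
rewrite /RR; have -> : mkH <<Hmx p>>%MS = p; last by [].
by rewrite -{2}(HmxK p); apply: eqH; apply: genmxE.
Qed.

Lemma RR_mono m k (A : 'M[C]_(m,d)) (B : 'M[C]_(k,d)) x :
  (A <= B)%MS -> RR A x -> RR B x.
Proof.
case: HM => _ [_ [Hle _]] AB; apply: Hle.
by rewrite /leH !Hmx_mkH !genmxE.
Qed.

Lemma RR_eq m k (A : 'M[C]_(m,d)) (B : 'M[C]_(k,d)) x :
  (A :=: B)%MS -> RR A x -> RR B x.
Proof. by move=> eq; apply: RR_mono; rewrite eq. Qed.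

Lemma RR_pi m k (A : 'M[C]_(m,d)) (B : 'M[C]_(k,d)) x :
  RR A x -> RR (B :&: (orth B + A))%MS (piA B x).
Proof.
case: HM => _ [_ [_ [_ [Hpi _]]]] HA.
have := Hpi _ (mkH <<B>>%MS) _ HA; rewrite relRR; apply: RR_mono.
rewrite /sasaki /meetH /joinH /orthH !Hmx_mkH !genmxE.
apply: capmxS; first by rewrite !genmxE.
rewrite genmxE; apply: addsmxS; last by rewrite !genmxE.
rewrite genmxE; apply: (@orthS _ _ _ B); by rewrite !genmxE.
Qed.

Lemma RR_pibot m (B : 'M[C]_(m,d)) x :
  RR (0 : 'M[C]_d) (piA B x) -> RR (orth B) x.
Proof.
case: HM => _ [_ [_ [_ [_ [_ [Hbot _]]]]]] H.
have H' : Defs.rel M (botH d) (pi_ M (mkH <<B>>%MS) x).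
  move: H; rewrite /RR /botH; congr (Defs.rel M _ _); apply: eqH; exact: genmxE.
have := proj1 (relRR _ _) (Hbot _ _ H'); apply: RR_mono.
rewrite /orthH Hmx_mkH genmxE; apply: orthS; by rewrite !genmxE.
Qed.

Lemma compatP m k (A : 'M[C]_(m,d)) (B : 'M[C]_(k,d)) :
  (forall v : V, (v <= A)%MS -> (v <= (A :&: B) + (A :&: orth B))%MS) ->
  compatible (mkH <<A>>%MS) (mkH <<B>>%MS).
Proof.
move=> H; rewrite /compatible /joinH /meetH /orthH !Hmx_mkH.
rewrite ?genmx_id ?gker ?gcap ?gadd; apply: eqH; apply/eqmxP/andP; split; rewrite !genmxE.
  apply/row_subP=> i; apply: submx_trans (H _ (row_sub i A)) _.
  by apply: addsmxS; rewrite genmxE.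
by rewrite addsmx_sub !genmxE !capmxSl.
Qed.

Lemma RR_meet m k (A : 'M[C]_(m,d)) (B : 'M[C]_(k,d)) x :
  (forall v : V, (v <= A)%MS -> (v <= (A :&: B) + (A :&: orth B))%MS) ->
  RR A x -> RR B x -> RR (A :&: B)%MS x.
Proof.
case: HM => _ [_ [_ [Hmeet _]]] Hc HA HB.
have := Hmeet _ _ (compatP Hc) _ HA HB; rewrite relRR /meetH Hmx_mkH.
by apply: RR_mono; rewrite !Hmx_mkH ?genmx_id ?gcap genmxE.
Qed.

Lemma RR_perp m k (A : 'M[C]_(m,d)) (B : 'M[C]_(k,d)) x :
  RR A x -> (A <= orth B)%MS -> RR (orth B) x.
Proof.
move=> HA AB; apply: RR_pibot; apply: RR_mono (RR_pi B HA).
rewrite -(cap_orth0 B); apply: capmxS => //.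
by rewrite addsmx_sub; apply/andP; split.
Qed.

Lemma RR_bot2 m k (A : 'M[C]_(m,d)) (B : 'M[C]_(k,d)) x :
  RR A x -> RR B x -> (A <= orth B)%MS -> RR (0 : 'M[C]_d) x.
Proof.
move=> HA HB AB.
have H1 : forall v : V, (v <= A)%MS -> (v <= (A :&: B) + (A :&: orth B))%MS.
  by move=> v vA; apply: submx_trans (addsmxSr _ _); rewrite sub_capmx vA (submx_trans vA AB).
apply: RR_mono (RR_meet H1 HA HB).
by rewrite capmxC -(cap_orth0 B) capmxS.
Qed.

Lemma RR_meet_orth m k (A : 'M[C]_(m,d)) (B : 'M[C]_(k,d)) x :
  (orth B <= A)%MS -> RR A x -> RR B x -> RR (A :&: B)%MS x.
Proof.
move=> BA; apply: RR_meet => v vA.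
case: (vec_decomp B v) => a aB va.
have aA : (a <= A)%MS.
  have -> : a = v - (v - a) by rewrite opprD opprK addrA subrr add0r.
  apply: addmx_sub => //; rewrite eqmx_opp; exact: submx_trans va BA.
have -> : v = a + (v - a) by rewrite addrC subrK.
apply: addmx_sub_adds; first by rewrite sub_capmx aA aB.
rewrite sub_capmx va andbT; apply: addmx_sub => //; by rewrite eqmx_opp.
Qed.
End Model.


Local Notation R := Rdefinitions.R.

Record R3 := mk3 { c1 : R; c2 : R; c3 : R }.
Definition rdot (a b : R3) : R := c1 a * c1 b + c2 a * c2 b + c3 a * c3 b.
Definition lin (al : R) (a : R3) (be : R) (b : R3) : R3 :=
  mk3 (al * c1 a + be * c1 b) (al * c2 a + be * c2 b) (al * c3 a + be * c3 b).
Definition rscale (mu : R) (a : R3) : R3 := mk3 (mu * c1 a) (mu * c2 a) (mu * c3 a).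
Definition kvec (a b h : R3) : R3 := lin (rdot h b) a (- rdot a b) h.
Definition wvec (a b h : R3) : R3 :=
  let k := kvec a b h in lin (rdot h k) a (- rdot a k) h.

Definition Gprops (G : R3 -> Prop) (P : Prop) :=
  [/\ (forall a b h, G a -> G b -> rdot h (kvec a b h) != 0 -> G (wvec a b h)),
      (forall a b, G a -> G b -> rdot a b = 0 -> P) &
      (forall a mu, G a -> mu != 0 -> G (rscale mu a))].

Definition e1 := mk3 1 0 0.

Definition Qmap (q1 q2 q3 : R3) (a : R3) : R3 :=
  mk3 (c1 a * c1 q1 + c2 a * c1 q2 + c3 a * c1 q3)
      (c1 a * c2 q1 + c2 a * c2 q2 + c3 a * c2 q3)
      (c1 a * c3 q1 + c2 a * c3 q2 + c3 a * c3 q3).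

Section Rot.
Variables q1 q2 q3 : R3.
Hypotheses (h11 : rdot q1 q1 = 1) (h22 : rdot q2 q2 = 1) (h33 : rdot q3 q3 = 1)
  (h12 : rdot q1 q2 = 0) (h13 : rdot q1 q3 = 0) (h23 : rdot q2 q3 = 0).
Local Notation Q := (Qmap q1 q2 q3).

Lemma Qdot a b : rdot (Q a) (Q b) = rdot a b.
Proof.
have E : rdot (Q a) (Q b) =
  c1 a * c1 b * rdot q1 q1 + c2 a * c2 b * rdot q2 q2 + c3 a * c3 b * rdot q3 q3
  + (c1 a * c2 b + c2 a * c1 b) * rdot q1 q2
  + (c1 a * c3 b + c3 a * c1 b) * rdot q1 q3
  + (c2 a * c3 b + c3 a * c2 b) * rdot q2 q3.
  by rewrite /rdot /Qmap /=; ring.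
by rewrite E h11 h22 h33 h12 h13 h23 /rdot; ring.
Qed.

Lemma Qlin al a be b : Q (lin al a be b) = lin al (Q a) be (Q b).
Proof. by rewrite /Qmap /lin /=; congr mk3; ring. Qed.

Lemma Qscale mu a : Q (rscale mu a) = rscale mu (Q a).
Proof. by rewrite /Qmap /rscale /=; congr mk3; ring. Qed.

Lemma Qkvec a b h : kvec (Q a) (Q b) (Q h) = Q (kvec a b h).
Proof. by rewrite /kvec Qlin !Qdot. Qed.

Lemma Qwvec a b h : wvec (Q a) (Q b) (Q h) = Q (wvec a b h).
Proof. by rewrite /wvec Qkvec !Qdot Qlin. Qed.

Lemma Gprops_rot G P : Gprops G P -> Gprops (fun a => G (Q a)) P.
Proof.
case=> H1 H2 H3; split.
- move=> a b h Ga Gb nz; rewrite -Qwvec; apply: H1 => //.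
  by rewrite Qkvec Qdot.
- by move=> a b Ga Gb ab; apply: (H2 _ _ Ga Gb); rewrite Qdot.
- by move=> a mu Ga nz; rewrite Qscale; apply: H3.
Qed.
End Rot.

Lemma sqrt_ex (x : R) : 0 <= x -> exists s : R, 0 <= s /\ s ^+ 2 = x.
Proof. by move=> hx; exists (Num.sqrt x); rewrite sqrtr_ge0 sqr_sqrtr. Qed.

Lemma nz_k (r s : R) :
  rdot (mk3 0 1 s) (kvec e1 (mk3 1 r 0) (mk3 0 1 s)) != 0.
Proof.
rewrite (_ : rdot _ _ = - (1 + s ^+ 2)).
  by apply: ltr0_neq0; have := sqr_ge0 s; lra.
by rewrite /kvec /lin /e1 /rdot /=; ring.
Qed.

Lemma inv_sqrt_ex (x : R) : 0 < x -> exists p : R, 0 < p /\ p ^+ 2 * x = 1.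
Proof.
move=> hx; have [s [s0 s2]] := @sqrt_ex x (ltW hx).
have sp : 0 < s by rewrite lt_def s0 andbT; apply/eqP=> s00; move: s2; rewrite s00; lra.
exists s^-1; split; first by rewrite invr_gt0.
by rewrite -s2 exprVn mulVf // expf_neq0 // gt_eqF.
Qed.

Lemma base_gadget G P r : Gprops G P -> 0 < r -> 8 <= r ^+ 2 ->
  G e1 -> G (mk3 1 r 0) -> P.
Proof.
case=> H1 H2 H3 r0 r8 Ga Gb.
have [S [S0 S2]] := @sqrt_ex (r ^+ 2 - 8) (ltac:(lra)).
set nu := (r ^+ 2 - 2 + r * S) / 2.
have nu0 : 0 <= nu by rewrite /nu; nra.
have [mu [mu0 mu2]] := @sqrt_ex nu nu0.
set b := mk3 1 r 0.
have nz : forall s : R, rdot (mk3 0 1 s) (kvec e1 b (mk3 0 1 s)) != 0.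
  move=> s; rewrite (_ : rdot _ _ = - (1 + s ^+ 2)).
    by apply: ltr0_neq0; have := sqr_ge0 s; lra.
  by rewrite /b /kvec /lin /e1 /rdot /=; ring.
have Gp := H1 _ _ _ Ga Gb (nz mu).
have Gm := H1 _ _ _ Ga Gb (nz (- mu)).
apply: (H2 _ _ Gp Gm).
rewrite /b /wvec /kvec /lin /e1 /rdot /=.
transitivity ((1 + mu^+2)^+2 + r^+2 - r^+2 * mu^+2); first by ring.
rewrite mu2 /nu.
transitivity (r^+2 * (S^+2 - (r^+2 - 8)) / 4); first by field.
by rewrite S2 subrr mulr0 mul0r.
Qed.

Lemma step_main (P : Prop) (r0 : R) (n : nat) : 0 < r0 ->
  forall G r, Gprops G P -> r0 <= r -> 8 <= r ^+ 2 + n%:R * (r0 ^+ 4 / 4) ->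
  G e1 -> G (mk3 1 r 0) -> P.
Proof.
move=> r00; elim: n => [|n IH] G r HG rr0 Hn Ga Gb.
  by apply: (base_gadget HG _ _ Ga Gb); lra.
have r0' : 0 < r by lra.
case: (lerP 8 (r ^+ 2)) => r8; first by apply: (base_gadget HG r0' r8 Ga Gb).
case: HG => H1 H2 H3.
set b := mk3 1 r 0.
have Gp := H1 _ _ _ Ga Gb (nz_k r 1).
have Gm := H1 _ _ _ Ga Gb (nz_k r (-1)).
have [n1 [n10 hn]] := @inv_sqrt_ex (4 + 2 * r ^+ 2) ltac:(nra).
have [p [p0 hp]] := @inv_sqrt_ex (4 + r ^+ 2) ltac:(nra).
have pnz : p != 0 by rewrite gt_eqF.
set q1 := mk3 (2 * n1) (r * n1) (r * n1).
set q2 := mk3 (2 * r * n1 * p) (r ^+ 2 * n1 * p) (- (4 + r ^+ 2) * n1 * p).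
set q3 := mk3 (- r * p) (2 * p) 0.
have h11 : rdot q1 q1 = 1 by apply: eq_trans _ hn; rewrite /rdot /=; ring.
have h22 : rdot q2 q2 = 1.
  apply: eq_trans _ (_ : (p ^+ 2 * (4 + r ^+ 2)) * (n1 ^+ 2 * (4 + 2 * r ^+ 2)) = 1).
    by rewrite /rdot /=; ring.
  by rewrite hp hn mulr1.
have h33 : rdot q3 q3 = 1 by apply: eq_trans _ hp; rewrite /rdot /=; ring.
have h12 : rdot q1 q2 = 0 by rewrite /rdot /=; ring.
have h13 : rdot q1 q3 = 0 by rewrite /rdot /=; ring.
have h23 : rdot q2 q3 = 0 by rewrite /rdot /=; ring.
have HG' := Gprops_rot h11 h22 h33 h12 h13 h23 (And3 H1 H2 H3).
set r' := r / (2 * p).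
have r'0 : 0 < r' by rewrite /r' divr_gt0 // mulr_gt0.
have r'2 : r' ^+ 2 = r ^+ 2 + r ^+ 4 / 4.
  transitivity (r ^+ 2 * (p ^+ 2 * (4 + r ^+ 2)) / (4 * p ^+ 2)).
    by rewrite hp /r'; field.
  by field.
apply: (IH _ r' HG').
- have h : r ^+ 2 <= r' ^+ 2.
    by rewrite r'2; have := sqr_ge0 (r ^+ 2); rewrite -exprM; lra.
  nra.
- rewrite r'2; have h4 : r0 ^+ 4 <= r ^+ 4.
    by rewrite lerXn2r // ?nnegrE; lra.
  move: Hn; rewrite -natr1; nra.
- rewrite (_ : Qmap q1 q2 q3 e1 = rscale (- n1) (wvec e1 b (mk3 0 1 1))).
    by apply: H3 => //; rewrite oppr_eq0 gt_eqF.
  by rewrite /q1 /q2 /q3 /b /wvec /kvec /lin /rscale /Qmap /e1 /rdot /=; congr mk3; ring.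
- rewrite (_ : Qmap q1 q2 q3 (mk3 1 r' 0) =
      rscale (- (2 + r ^+ 2) * n1 / 2) (wvec e1 b (mk3 0 1 (-1)))).
    apply: H3 => //; apply: ltr0_neq0.
    have hpos : 0 < (2 + r ^+ 2) * n1 / 2 by rewrite divr_gt0 // mulr_gt0 //; nra.
    have -> : - (2 + r ^+ 2) * n1 / 2 = - ((2 + r ^+ 2) * n1 / 2) by ring.
    by rewrite oppr_lt0.
  by rewrite /q1 /q2 /q3 /b /r' /wvec /kvec /lin /rscale /Qmap /e1 /rdot /=; congr mk3; field.
Qed.

Lemma LLreal (G : R3 -> Prop) (P : Prop) (r : R) :
  Gprops G P -> 0 < r -> G e1 -> G (mk3 1 r 0) -> P.
Proof.
move=> HG r0 Ga Gb.
set c := r ^+ 4 / 4.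
have c0 : 0 < c by rewrite /c divr_gt0 // exprn_gt0.
have := @archi_boundP _ (8 / c) ltac:(by rewrite divr_ge0 // ltW).
set n := Num.Def.archi_bound _ => hn.
apply: (@step_main P r n r0 G r HG (lexx r) _ Ga Gb).
have h : 8 <= n%:R * c.
  by rewrite -ler_pdivrMr //; apply: ltW.
apply: le_trans h _; rewrite lerDr; exact: sqr_ge0.
Qed.


Local Notation RC := (real_complex R).

Lemma conjR (x : R) : Num.conj (RC x) = (RC x).
Proof. exact: conjc_real. Qed.

Section Frame.
Variable d : nat.
Variable M : LStructure d.
Hypothesis HM : PQM_model M.
Local Notation V := 'rV[C]_d.
Variables f1 f2 f3 : V.
Hypotheses (o11 : cdot f1 f1 = 1) (o22 : cdot f2 f2 = 1) (o33 : cdot f3 f3 = 1)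
  (o12 : cdot f1 f2 = 0) (o13 : cdot f1 f3 = 0) (o23 : cdot f2 f3 = 0)
  (o21 : cdot f2 f1 = 0) (o31 : cdot f3 f1 = 0) (o32 : cdot f3 f2 = 0).

Definition Ev (a : R3) : V := (RC (c1 a)) *: f1 + (RC (c2 a)) *: f2 + (RC (c3 a)) *: f3.

Lemma Ev_dot a b : cdot (Ev a) (Ev b) = (RC (rdot a b)).
Proof.
rewrite /Ev !cdotDl !cdotZl !cdotDr !cdotZr o11 o22 o33 o12 o13 o23 o21 o31 o32 !conjR.
by rewrite /rdot !rmorphD !rmorphM /=; ring.
Qed.

Lemma Ev_lin al a be b : Ev (lin al a be b) = (RC al) *: Ev a + (RC be) *: Ev b.
Proof.
apply/matrixP=> i j; rewrite /Ev /lin /= !mxE.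
by rewrite !rmorphD !rmorphM /=; ring.
Qed.

Lemma Ev_scale mu a : Ev (rscale mu a) = (RC mu) *: Ev a.
Proof.
apply/matrixP=> i j; rewrite /Ev /rscale /= !mxE.
by rewrite !rmorphM /=; ring.
Qed.

Lemma realC_eq0 (x : R) : ((RC x) == 0) = (x == 0).
Proof. by apply/eqP/eqP=> [[]|->] //. Qed.

Lemma mx11_mul m (u : 'M[C]_(1,1)) (v : 'M[C]_(1,m)) : u *m v = u 0 0 *: v.
Proof. by rewrite {1}[u]mx11_scalar mul_scalar_mx. Qed.

Lemma Gprops_frame (y : M) :
  Gprops (fun a => RR (Ev a) y) (RR (0 : 'M[C]_d) y).
Proof.
split.
- move=> a b h /= Ga Gb nz /=.
  set k := kvec a b h.
  have Hpl : RR (Ev a + Ev h)%MS y.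
    apply: (RR_mono HM _ Ga). exact: addsmxSl.
  have bk : rdot b k = 0 by rewrite /k /kvec /lin /rdot /=; ring.
  have Hk : RR (orth (Ev k)) y.
    by apply: (RR_perp HM Gb); rewrite cdot_orth Ev_dot bk.
  have kin : (orth (orth (Ev k)) <= Ev a + Ev h)%MS.
    rewrite orthK /k /kvec Ev_lin.
    by apply: addmx_sub_adds; apply: scalemx_sub.
  have Hm := RR_meet_orth HM kin Hpl Hk.
  apply: (RR_mono HM _ Hm); apply/row_subP=> i.
  have := row_sub i ((Ev a + Ev h) :&: orth (Ev k))%MS.
  set z := row i _; rewrite sub_capmx => /andP[zs zk].
  case/sub_addsmxP: zs => [[u1 u2]] /=; rewrite !mx11_mul => zE.
  move: zk; rewrite cdot_orth zE cdotDl !cdotZl !Ev_dot => /eqP hz.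
  have K1 : (RC (rdot h k)) != 0 by rewrite realC_eq0.
  rewrite /wvec -/k Ev_lin.
  apply/sub_rVP; exists (u1 0 0 / (RC (rdot h k))).
  have hb : u2 0 0 = - (u1 0 0 * (RC (rdot a k))) / (RC (rdot h k)).
    apply: (mulIf K1); rewrite mulfVK //; move/eqP: hz; rewrite addr_eq0 => /eqP ->.
    by rewrite opprK.
  rewrite hb; apply/matrixP=> i' j; rewrite !mxE rmorphN /=.
  by field.
- move=> a b /= Ga Gb ab; apply: (RR_bot2 HM Ga Gb).
  by rewrite cdot_orth Ev_dot ab.
- move=> a mu /= Ga nz; apply: (RR_eq HM _ Ga).
  by rewrite Ev_scale; apply/eqmx_sym/eqmx_scale; rewrite realC_eq0.
Qed.
End Frame.

Section LL.
Variable d : nat.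
Variable M : LStructure d.
Hypothesis HM : PQM_model M.
Local Notation V := 'rV[C]_d.

Lemma cdot_ge0 (u : V) : 0 <= cdot u u.
Proof. by rewrite cdotE; apply: sumr_ge0 => j _; apply: mul_conjC_ge0. Qed.

Lemma real_ge0 (x : C) : 0 <= x -> x = RC (complex.Re x).
Proof. by move=> hx; rewrite [LHS]complexE ger0_Im // mulr0 addr0. Qed.

Lemma norm_ex (g : V) : g != 0 -> exists s : R, 0 < s /\ cdot g g = RC (s ^+ 2).
Proof.
move=> gnz; have x0 := cdot_ge0 g.
have xE := real_ge0 x0.
have re0 : 0 <= complex.Re (cdot g g) by move: x0; rewrite lecE => /andP[].
exists (Num.sqrt (complex.Re (cdot g g))); rewrite sqr_sqrtr // -xE; split=> //.
rewrite sqrtr_gt0 lt_def re0 andbT; apply/eqP=> r0.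
by move/eqP: gnz; apply; apply: cdot_eq0; rewrite xE r0.
Qed.

Lemma unit_ex (g : V) : g != 0 ->
  exists s : R, 0 < s /\ cdot (RC s^-1 *: g) (RC s^-1 *: g) = 1.
Proof.
move=> /norm_ex[s [s0 gs]]; exists s; split=> //.
rewrite cdotZl cdotZr conjR gs -!rmorphM /=.
have -> : s^-1 * (s^-1 * s ^+ 2) = 1 by field; rewrite gt_eqF.
by rewrite rmorph1.
Qed.

Lemma LLc (y : M) (u v : V) : (3 <= d)%N -> RR u y -> RR v y ->
  ~~ (v <= u)%MS -> RR (0 : 'M[C]_d) y.
Proof.
move=> d3 Hu Hv vu.
case: (eqVneq u 0) => [u0|unz].
  by apply: (RR_mono HM _ Hu); rewrite u0 sub0mx.
have [s1 [s10 o11]] := unit_ex unz.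
set f1 := RC s1^-1 *: u in o11.
have s1nz : RC s1 != 0 by rewrite realC_eq0 gt_eqF.
have uf1 : u = RC s1 *: f1.
  by rewrite /f1 scalerA -rmorphM /= mulfV ?gt_eqF // rmorph1 scale1r.
set al := cdot v f1.
case: (eqVneq al 0) => [a0|anz].
  apply: (RR_bot2 HM Hv Hu); rewrite cdot_orth uf1 cdotZr -/al a0 mulr0 //.
set g := al^-1 *: v - f1.
have gf1 : cdot g f1 = 0 by rewrite /g cdotBl cdotZl -/al mulVf // o11 subrr.
have gnz : g != 0.
  apply/eqP=> g0; move: vu; rewrite (_ : v = al *: f1) ?negbK.
    by rewrite /f1 scalerA scalemx_sub.
  have h : al^-1 *: v = f1 by apply/eqP; rewrite -subr_eq0 -/g g0.
  by rewrite -h scalerA mulfV // scale1r.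
have [s2 [s20 o22]] := unit_ex gnz.
set f2 := RC s2^-1 *: g in o22.
have o21 : cdot f2 f1 = 0 by rewrite /f2 cdotZl gf1 mulr0.
have o12 : cdot f1 f2 = 0 by rewrite cdotC o21 rmorph0.
set X := orth (f1 + f2)%MS.
have rk : (\rank (f1 + f2)%MS <= 2)%N.
  have := mxrank_sum_cap f1 f2.
  have := rank_leq_row f1; have := rank_leq_row f2 => h2 h1 hs.
  apply: leq_trans (leq_addr (\rank (f1 :&: f2))%MS _) _; rewrite hs.
  exact: (leq_add h1 h2).
have Xnz : X != 0.
  apply/eqP=> X0; move: (rank_orth (f1 + f2)%MS); rewrite -/X X0 mxrank0.
  move/esym/eqP; rewrite subn_eq0 => h.
  by move: (leq_trans d3 (leq_trans h rk)).
have [i ri] : exists i, row i X != 0.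
  apply/existsP; rewrite -negb_forall; apply: contra Xnz => /forallP H.
  by apply/eqP/row_matrixP=> i; rewrite row0; apply/eqP/H.
set e := row i X in ri.
have eX : (e <= X)%MS by apply: row_sub.
have e1 : cdot e f1 = 0.
  apply/eqP; rewrite -cdot_orth; apply: submx_trans eX _; apply: orthS.
  exact: addsmxSl.
have e2 : cdot e f2 = 0.
  apply/eqP; rewrite -cdot_orth; apply: submx_trans eX _; apply: orthS.
  exact: addsmxSr.
have [s3 [s30 o33]] := unit_ex ri.
set f3 := RC s3^-1 *: e in o33.
have o31 : cdot f3 f1 = 0 by rewrite /f3 cdotZl e1 mulr0.
have o32 : cdot f3 f2 = 0 by rewrite /f3 cdotZl e2 mulr0.
have o13 : cdot f1 f3 = 0 by rewrite cdotC o31 rmorph0.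
have o23 : cdot f2 f3 = 0 by rewrite cdotC o32 rmorph0.
have HG := Gprops_frame HM o11 o22 o33 o12 o13 o23 o21 o31 o32 y.
apply: (LLreal HG s20).
- apply: (RR_mono HM _ Hu).
  rewrite /Ev /e1 /= rmorph1 rmorph0 !scale0r !addr0 scale1r.
  by rewrite {1}uf1 scalemx_sub.
- apply: (RR_mono HM _ Hv).
  rewrite /Ev /= rmorph1 rmorph0 scale0r addr0 scale1r.
  rewrite /f2 scalerA -rmorphM /= mulfV ?gt_eqF // rmorph1 scale1r.
  by rewrite /g addrC subrK eqmx_scale ?invr_eq0.
Qed.
End LL.


Section Main.
Variable d : nat.
Local Notation V := 'rV[C]_d.

Lemma line_capture k (X : 'M[C]_(k,d)) (w z : V) : w != 0 -> (w <= X)%MS ->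
  (z <= X)%MS -> (z <= orth (X :&: orth w))%MS -> (z <= w)%MS.
Proof.
move=> wnz wX zX zc.
have ww : cdot w w != 0 by apply/eqP=> /cdot_eq0 /eqP; apply/negP.
set al := cdot z w / cdot w w.
set z' := z - al *: w.
have z'w : cdot z' w = 0 by rewrite /z' cdotBl cdotZl /al divfK // subrr.
have z'X : (z' <= X)%MS by rewrite /z' addmx_sub // eqmx_opp scalemx_sub.
have z'c : (z' <= X :&: orth w)%MS.
  by rewrite sub_capmx z'X /= cdot_orth z'w.
have zz' : cdot z z' = 0 by apply: orth_cdot zc z'c.
have wz' : cdot w z' = 0 by rewrite cdotC z'w rmorph0.
have : cdot z' z' = 0 by rewrite {1}/z' cdotBl cdotZl zz' wz' mulr0 subrr.
move/cdot_eq0 => /eqP; rewrite subr_eq0 => /eqP ->; exact: scalemx_sub.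
Qed.

Lemma ex_u_p (P Q : 'M[C]_d) : ~ compatible (mkH <<P>>%MS) (mkH <<Q>>%MS) ->
  exists u : V, [/\ (u <= P)%MS, (u <= orth (P :&: Q))%MS & ~~ (u <= orth Q)%MS].
Proof.
move=> nc.
case: (boolP (P :&: orth (P :&: Q) <= orth Q)%MS) => [H|].
  exfalso; apply: nc; apply: compatP => v vP.
  case: (vec_decomp (P :&: Q)%MS v) => a aPQ va.
  have vaP : (v - a <= P)%MS.
    by rewrite addmx_sub // eqmx_opp; apply: submx_trans aPQ _; apply: capmxSl.
  have -> : v = a + (v - a) by rewrite addrC subrK.
  apply: addmx_sub_adds => //.
  by rewrite sub_capmx vaP; apply: submx_trans H; rewrite sub_capmx vaP va.
case/row_subPn=> i; set u := row i _ => nu.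
have : (u <= P :&: orth (P :&: Q))%MS by apply: row_sub.
by rewrite sub_capmx => /andP[uP uo]; exists u.
Qed.

Lemma ex_u_q (P Q : 'M[C]_d) : ~ compatible (mkH <<P>>%MS) (mkH <<Q>>%MS) ->
  exists u : V, [/\ (u <= Q)%MS, (u <= orth (Q :&: P))%MS & ~~ (u <= orth P)%MS].
Proof.
move=> nc.
case: (boolP (Q :&: orth (Q :&: P) <= orth P)%MS) => [H|].
  exfalso; apply: nc; apply: compatP => v vP.
  case: (vec_decomp (P :&: Q)%MS v) => a aPQ va.
  have vaP : (v - a <= P)%MS.
    by rewrite addmx_sub // eqmx_opp; apply: submx_trans aPQ _; apply: capmxSl.
  have -> : v = a + (v - a) by rewrite addrC subrK.
  apply: addmx_sub_adds => //.
  rewrite sub_capmx vaP /= orth_sym.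
  have QP : (Q :&: P <= Q)%MS by apply: capmxSl.
  rewrite -(decomp_orth QP); rewrite addsmx_sub; apply/andP; split.
    by rewrite -orth_sym capmxC.
  apply: submx_trans (orthS vaP); rewrite capmxC; exact: H.
case/row_subPn=> i; set u := row i _ => nu.
have : (u <= Q :&: orth (Q :&: P))%MS by apply: row_sub.
by rewrite sub_capmx => /andP[uQ uo]; exists u.
Qed.
End Main.

Section Main2.
Variable d : nat.
Variable M : LStructure d.
Hypothesis HM : PQM_model M.
Local Notation V := 'rV[C]_d.

Lemma mkH_Hmx (p : Hd d) : mkH <<Hmx p>>%MS = p.
Proof. by rewrite -{2}(HmxK p); apply: eqH; apply: genmxE. Qed.

Lemma nonmin (m : M) (p : Hd d) (Q : 'M[C]_d) (u : V) : (3 <= d)%N ->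
  Defs.rel M p m -> RR Q m -> (u <= Hmx p)%MS -> (u <= orth (Hmx p :&: Q))%MS ->
  ~~ (u <= orth Q)%MS -> ~ minimal_in (filt M m) p.
Proof.
move=> d3 hp Hq uP uo nuQ.
set P := Hmx p in uP uo.
have Hp : RR P m by move/relRR: hp.
have unz : u != 0 by apply: contraNneq nuQ => ->; rewrite sub0mx.
have uu : cdot u u != 0 by apply/eqP=> /cdot_eq0 /eqP; apply/negP.
set p' := (P :&: orth u)%MS.
set b := orth p'.
have ob : (orth b :=: p')%MS by apply: orthK.
have p'P : (p' <= P)%MS by apply: capmxSl.
have aux : forall a : V, (a <= p')%MS -> cdot u a = 0.
  move=> a ap; rewrite cdotC; apply/eqP; rewrite conjC_eq0 -cdot_orth.
  exact: submx_trans ap (capmxSr _ _).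
set y := piA b m.
have Yu : RR u y.
  apply: (RR_mono HM _ (RR_pi HM b Hp)); apply/row_subP=> i.
  have := row_sub i (b :&: (orth b + P))%MS; set z := row i _.
  rewrite sub_capmx => /andP[zb zP].
  have zP' : (z <= P)%MS.
    by apply: submx_trans zP _; rewrite addsmx_sub submx_refl andbT ob.
  exact: line_capture unz uP zP' zb.
set s := (b :&: (orth b + Q))%MS.
have Ys : RR s y by apply: (RR_pi HM b Hq).
case: (vec_decomp s u) => v' v's uv'.
have v'nz : v' != 0.
  apply/eqP=> v0; move: nuQ; rewrite orth_sym; case/row_subPn=> i.
  set z0 := row i Q; rewrite cdot_orth => z0u.
  case: (vec_decomp p' z0) => a ap za.
  have z2s : (z0 - a <= s)%MS.
    rewrite sub_capmx za /= addrC; apply: addmx_sub_adds; last exact: row_sub.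
    by rewrite eqmx_opp ob.
  move: uv'; rewrite v0 subr0 => us.
  have := orth_cdot us z2s; rewrite cdotBr (aux a ap) subr0 cdotC => /eqP.
  by rewrite conjC_eq0 (negbTE z0u).
have v'nu : ~~ (v' <= u)%MS.
  apply/negP=> /sub_rVP[be vE].
  have benz : be != 0 by apply: contraNneq v'nz => b0; rewrite vE b0 scale0r.
  have us : (u <= s)%MS.
    have -> : u = be^-1 *: v' by rewrite vE scalerA mulVf // scale1r.
    exact: scalemx_sub.
  move: us; rewrite sub_capmx => /andP[_ /sub_addsmxP[[x1 x2]] /= uE].
  set a := x1 *m orth b in uE; set zq := x2 *m Q in uE.
  have ap : (a <= p')%MS by rewrite -ob submxMl.
  have zqPQ : (zq <= P :&: Q)%MS.
    rewrite sub_capmx submxMl andbT.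
    have -> : zq = u - a by rewrite uE addrC addKr.
    by rewrite addmx_sub // eqmx_opp (submx_trans ap p'P).
  have := orth_cdot uo zqPQ.
  have -> : zq = u - a by rewrite uE addrC addKr.
  by rewrite cdotBr (aux a ap) subr0 => /eqP; apply/negP.
set c := (s :&: orth v')%MS.
have uc : (u <= orth c)%MS.
  rewrite orth_sym; apply/row_subP=> i.
  have := row_sub i c; set z := row i c; rewrite sub_capmx => /andP[zs zv].
  rewrite cdot_orth; rewrite cdot_orth in zv.
  have -> : u = v' + (u - v') by rewrite addrC subrK.
  rewrite cdotDr (eqP zv) add0r cdotC (orth_cdot uv' zs) rmorph0 //.
have Yc : RR (orth c) y by apply: (RR_perp HM Yu uc).
have Ym : RR (s :&: orth c)%MS y.
  by apply: (RR_meet_orth HM _ Ys Yc); rewrite orthK capmxSl.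
have Yv' : RR v' y.
  apply: (RR_mono HM _ Ym); apply/row_subP=> i.
  have := row_sub i (s :&: orth c)%MS; set z := row i _.
  rewrite sub_capmx => /andP[zs zc].
  exact: line_capture v'nz v's zs zc.
have Y0 := LLc HM d3 Yu Yv' v'nu.
have Hm' : RR p' m by apply: (RR_eq HM ob); exact: (RR_pibot HM Y0).
case=> _ Hmin.
have := Hmin (mkH <<p'>>%MS) Hm'.
rewrite /leH Hmx_mkH !genmxE => /(_ p'P) eqp.
move: uP; rewrite /P -eqp Hmx_mkH !genmxE => up'.
move: (submx_trans up' (capmxSr _ _)); rewrite cdot_orth.
by rewrite (negbTE uu).
Qed.

End Main2.

Theorem mainTheorem9 (d : nat) (M : LStructure d) (m : M) (p q : Hd d) :
  (3 <= d)%N -> PQM_model M ->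
  filt M m p -> filt M m q -> ~ compatible p q ->
  ~ minimal_in (filt M m) p /\ ~ minimal_in (filt M m) q.
Proof.
move=> d3 HM hp hq nc.
have nc' : ~ compatible (mkH <<Hmx p>>%MS) (mkH <<Hmx q>>%MS).
  by rewrite !mkH_Hmx.
have Hp : RR (Hmx p) m by move/relRR: hp.
have Hq : RR (Hmx q) m by move/relRR: hq.
split.
- case: (ex_u_p nc') => u [uP uo nuQ].
  exact: (nonmin HM d3 hp Hq uP uo nuQ).
- case: (ex_u_q nc') => u [uQ uo nuP].
  exact: (nonmin HM d3 hq Hp uQ uo nuP).
Qed.
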